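(* Let $(\mathcal{C},\mathsf{I},\otimes,\lambda,\rho,\alpha)$ be a monoidal category with finite products, $\mathsf{T}=(T,\eta,\mu)$ a monoid in it, and $(\mathcal{E},\mathcal{M})$ an orthogonal factorization system on $\mathcal{C}$ such that: $\mathcal{E}$ is closed under $(-)\otimes S$ for every object $(S,s)$ of $\mathcal{M}/T$; the skew monoidal category $\mathcal{M}/\mathsf{T}=(\mathcal{M}/T,\mathsf{J},\boxdot)$ is monoidal; $\mathcal{E}$ contains all canonical morphisms $\langle\pi_i\otimes Y\rangle_i : (\prod_i X_i)\otimes Y\to\prod_i(X_i\otimes Y)$; and $\mathcal{E}$ is closed under finite products. Let $\phi:T^n\to T$ be an $n$-ary algebraic operation for $\mathsf{T}$ and let $(R_1,r_1),\dots,(R_n,r_n),(R',r')$ be objects of $\mathcal{M}/T$. Then there is a bijection between (1) morphisms $p:\prod_i R_i\to R'$ of $\mathcal{C}$ such that $r'\circ p = \phi\circ\prod_i r_i$, and (2) $(R_1,\dots,R_n;R')$-ary algebraic operations $\psi$ for the graded monoid $T_{\mathcal{M}}:\mathcal{M}/\mathsf{T}\to\mathcal{C}$ that grade $\phi$.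
   Context: Orthogonal factorization system $(\mathcal{E},\mathcal{M})$: both classes contain isomorphisms and are closed under composition; every commuting square $g e = m f$ with $e\in\mathcal{E}$, $m\in\mathcal{M}$ has a unique diagonal $d$ ($de=f$, $md=g$); every morphism factors as $m\circ e$. A monoid: $\eta:\mathsf{I}\to T$, $\mu:T\otimes T\to T$ with the usual unit and associativity laws. $\mathcal{M}/T$: objects $(S,s)$ with $s:S\to T$ in $\mathcal{M}$; morphisms $f:(S,s)\to(S',s')$ with $s'f=s$. Factor $\eta=j\circ q$ with $q:\mathsf{I}\to\mathsf{J}$ in $\mathcal{E}$, $j$ in $\mathcal{M}$; factor $\mu\circ(s\otimes s')=(s\boxdot s')\circ q_{S,S'}$ with $q_{S,S'}:S\otimes S'\to S\boxdot S'$ in $\mathcal{E}$, $s\boxdot s'$ in $\mathcal{M}$. This gives a skew monoidal structure $(\mathcal{M}/T,(\mathsf{J},j),\boxdot)$, denoted $\mathcal{M}/\mathsf{T}$, whose action on morphisms and structure maps are the unique diagonals compatible with the $q$'s and the structure maps of $\mathcal{C}$; in particular $f\boxdot f'$ satisfies $(f\boxdot f')q_{S_1,S_1'}=q_{S_2,S_2'}(f\otimes f')$, the right unitor is $r_S = q_{S,\mathsf{J}}\circ(S\otimes q)\circ\rho_S$, and the associator $a$ satisfies $a\, q_{S\boxdot S',S''}(q_{S,S'}\otimes S'') = q_{S,S'\boxdot S''}(S\otimes q_{S',S''})\alpha_{S,S',S''}$. The graded monoid (lax monoidal functor) $T_{\mathcal{M}}:\mathcal{M}/\mathsf{T}\to\mathcal{C}$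 sends $(S,s)\mapsto S$ with unit $q$ and multiplication $q_{S,S'}$. An $n$-ary algebraic operation for $\mathsf{T}$ is $\phi:T^n\to T$ with $\phi\circ\mu^n\circ\langle\pi_i\otimes T\rangle_i = \mu\circ(\phi\otimes T) : T^n\otimes T\to T$. For a lax monoidal functor $(G,\eta^G,\mu^G):(\mathcal{G},I,\odot)\to\mathcal{C}$ from a monoidal category with associator $\alpha^{\mathcal{G}}$, a $(d_1,\dots,d_n;d')$-ary algebraic operation is a natural family $\psi_e:\prod_i G(d_i\odot e)\to G(d'\odot e)$ ($e\in\mathcal{G}$) such that for all $e,e'$: $\psi_{e\odot e'}\circ\prod_i G(\alpha^{\mathcal{G}})\circ\prod_i\mu^G_{d_i\odot e,e'}\circ\langle\pi_i\otimes Ge'\rangle_i = G(\alpha^{\mathcal{G}})\circ\mu^G_{d'\odot e,e'}\circ(\psi_e\otimes Ge')$. Given a grading with $\mathcal{M}$-components $g_d:Gd\to T$ (a monoidal transformation), $\psi$ grades $\phi$ if $g_{d'\odot e}\circ\psi_e = \phi\circ\prod_i g_{d_i\odot e}$ for all $e$; for $T_{\mathcal{M}}$, $g_{(S,s)}=s$. *)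

(* Defs.v *)
From mathcomp Require Import all_boot.
Set Implicit Arguments. Unset Strict Implicit. Unset Printing Implicit Defensive.

Record category := Category {
  ob :> Type;
  hom : ob -> ob -> Type;
  idm : forall A, hom A A;
  comp : forall A B C, hom B C -> hom A B -> hom A C;
  comp_assoc : forall A B C D (h : hom C D) (g : hom B C) (f : hom A B),
      comp h (comp g f) = comp (comp h g) f;
  comp_id_l : forall A B (f : hom A B), comp (idm B) f = f;
  comp_id_r : forall A B (f : hom A B), comp f (idm A) = f
}.
Arguments hom {c} : rename.
Arguments idm {c} A : rename.
Arguments comp {c A B C} : rename.
Notation "g ∘ f" := (comp g f) (at level 40, left associativity).

Definition is_iso (C : category) (A B : C) (f : hom A B) : Prop :=
  exists g : hom B A, g ∘ f = idm A /\ f ∘ g = idm B.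

Record monoidal (C : category) := Monoidal {
  tens0 : C -> C -> C;
  tens1 : forall A B A' B', hom A A' -> hom B B' -> hom (tens0 A B) (tens0 A' B');
  munit : C;
  lam : forall A, hom (tens0 munit A) A;
  lam_inv : forall A, hom A (tens0 munit A);
  rho : forall A, hom (tens0 A munit) A;
  rho_inv : forall A, hom A (tens0 A munit);
  alpha : forall A B D, hom (tens0 (tens0 A B) D) (tens0 A (tens0 B D));
  alpha_inv : forall A B D, hom (tens0 A (tens0 B D)) (tens0 (tens0 A B) D);
  tens1_id : forall A B, tens1 (idm A) (idm B) = idm (tens0 A B);
  tens1_comp : forall A1 A2 A3 B1 B2 B3 (f : hom A1 A2) (g : hom A2 A3)
      (f' : hom B1 B2) (g' : hom B2 B3),
      tens1 (g ∘ f) (g' ∘ f') = tens1 g g' ∘ tens1 f f';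
  lam_iso1 : forall A, lam_inv A ∘ lam A = idm _;
  lam_iso2 : forall A, lam A ∘ lam_inv A = idm _;
  rho_iso1 : forall A, rho_inv A ∘ rho A = idm _;
  rho_iso2 : forall A, rho A ∘ rho_inv A = idm _;
  alpha_iso1 : forall A B D, alpha_inv A B D ∘ alpha A B D = idm _;
  alpha_iso2 : forall A B D, alpha A B D ∘ alpha_inv A B D = idm _;
  lam_nat : forall A B (f : hom A B), f ∘ lam A = lam B ∘ tens1 (idm munit) f;
  rho_nat : forall A B (f : hom A B), f ∘ rho A = rho B ∘ tens1 f (idm munit);
  alpha_nat : forall A A' B B' D D' (f : hom A A') (g : hom B B') (h : hom D D'),
      alpha A' B' D' ∘ tens1 (tens1 f g) h = tens1 f (tens1 g h) ∘ alpha A B D;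
  triangle : forall A B,
      tens1 (idm A) (lam B) ∘ alpha A munit B = tens1 (rho A) (idm B);
  pentagon : forall A B D E,
      alpha A B (tens0 D E) ∘ alpha (tens0 A B) D E
      = tens1 (idm A) (alpha B D E) ∘ alpha A (tens0 B D) E
        ∘ tens1 (alpha A B D) (idm E)
}.
Arguments tens0 {C} m : rename.
Arguments tens1 {C} m {A B A' B'} : rename.
Arguments munit {C} m : rename.
Arguments lam {C} m A : rename.
Arguments rho {C} m A : rename.
Arguments rho_inv {C} m A : rename.
Arguments alpha {C} m A B D : rename.

Record fin_products (C : category) := FinProducts {
  prodo : forall n, ('I_n -> C) -> C;
  proj : forall n (X : 'I_n -> C) (i : 'I_n), hom (prodo X) (X i);
  tuple : forall n (X : 'I_n -> C) (A : C), (forall i, hom A (X i)) -> hom A (prodo X);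
  proj_tuple : forall n (X : 'I_n -> C) A (f : forall i, hom A (X i)) i,
      proj X i ∘ tuple f = f i;
  tuple_unique : forall n (X : 'I_n -> C) A (f : forall i, hom A (X i)) (h : hom A (prodo X)),
      (forall i, proj X i ∘ h = f i) -> h = tuple f
}.
Arguments prodo {C} p {n} X : rename.
Arguments proj {C} p {n} X i : rename.
Arguments tuple {C} p {n X A} f : rename.

Section Derived.
Variables (C : category) (MC : monoidal C) (PC : fin_products C).
Local Notation "A ⊗ B" := (tens0 MC A B) (at level 35).
Local Notation "f ⊗⊗ g" := (tens1 MC f g) (at level 35).

Definition prodmap n (X Y : 'I_n -> C) (f : forall i, hom (X i) (Y i))
  : hom (prodo PC X) (prodo PC Y) := tuple PC (fun i => f i ∘ proj PC X i).

Definition canon n (X : 'I_n -> C) (Y : C)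
  : hom (prodo PC X ⊗ Y) (prodo PC (fun i => X i ⊗ Y)) :=
  tuple PC (fun i => proj PC X i ⊗⊗ idm Y).

Definition powo (T : C) (n : nat) : C := prodo PC (fun _ : 'I_n => T).
End Derived.

Record monoid (C : category) (MC : monoidal C) := Monoid {
  mT : C;
  meta : hom (munit MC) mT;
  mmu : hom (tens0 MC mT mT) mT;
  munit_l : mmu ∘ tens1 MC meta (idm mT) = lam MC mT;
  munit_r : mmu ∘ tens1 MC (idm mT) meta = rho MC mT;
  massoc : mmu ∘ tens1 MC mmu (idm mT)
           = mmu ∘ tens1 MC (idm mT) mmu ∘ alpha MC mT mT mT
}.
Arguments mT {C MC} m : rename.
Arguments meta {C MC} m : rename.
Arguments mmu {C MC} m : rename.

Record ofs (C : category) := OFS {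
  Ecl : forall A B : C, hom A B -> Prop;
  Mcl : forall A B : C, hom A B -> Prop;
  E_iso : forall A B (f : hom A B), is_iso f -> Ecl f;
  M_iso : forall A B (f : hom A B), is_iso f -> Mcl f;
  E_comp : forall A B D (f : hom A B) (g : hom B D), Ecl f -> Ecl g -> Ecl (g ∘ f);
  M_comp : forall A B D (f : hom A B) (g : hom B D), Mcl f -> Mcl g -> Mcl (g ∘ f);
  diag_unique : forall A B X Y (e : hom A B) (m : hom X Y) (f : hom A X) (g : hom B Y),
      Ecl e -> Mcl m -> g ∘ e = m ∘ f ->
      exists! d : hom B X, d ∘ e = f /\ m ∘ d = g;
  fobj : forall A B, hom A B -> C;
  fe : forall A B (f : hom A B), hom A (fobj f);
  fm : forall A B (f : hom A B), hom (fobj f) B;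
  fe_E : forall A B (f : hom A B), Ecl (fe f);
  fm_M : forall A B (f : hom A B), Mcl (fm f);
  fact_eq : forall A B (f : hom A B), fm f ∘ fe f = f
}.
Arguments Ecl {C} o {A B} : rename.
Arguments Mcl {C} o {A B} : rename.
Arguments fobj {C} o {A B} : rename.
Arguments fe {C} o {A B} : rename.
Arguments fm {C} o {A B} : rename.
Arguments fm_M {C} o {A B} : rename.

Section Slice.
Variables (C : category) (MC : monoidal C) (PC : fin_products C)
          (F : ofs C) (Tm : monoid MC).
Local Notation "A ⊗ B" := (tens0 MC A B) (at level 35).
Local Notation "f ⊗⊗ g" := (tens1 MC f g) (at level 35).
Local Notation T := (mT Tm).

Record sobj := SObj { sob : C; sarr : hom sob T; sarr_M : Mcl F sarr }.

Definition is_smor (S S' : sobj) (f : hom (sob S) (sob S')) : Prop :=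
  sarr S' ∘ f = sarr S.

Definition Jobj : sobj := @SObj (fobj F (meta Tm)) (fm F (meta Tm)) (fm_M F (meta Tm)).
Definition qJ : hom (munit MC) (sob Jobj) := fe F (meta Tm).

Definition box (S S' : sobj) : sobj :=
  @SObj (fobj F (mmu Tm ∘ (sarr S ⊗⊗ sarr S')))
        (fm F (mmu Tm ∘ (sarr S ⊗⊗ sarr S')))
        (fm_M F (mmu Tm ∘ (sarr S ⊗⊗ sarr S'))).
Definition qbox (S S' : sobj) : hom (sob S ⊗ sob S') (sob (box S S')) :=
  fe F (mmu Tm ∘ (sarr S ⊗⊗ sarr S')).

(* d is f [.] f' : the unique diagonal with d q = q (f (x) f') in M/T *)
Definition is_boxmap (S1 S2 S1' S2' : sobj) (f : hom (sob S1) (sob S2))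
    (f' : hom (sob S1') (sob S2')) (d : hom (sob (box S1 S1')) (sob (box S2 S2'))) : Prop :=
  d ∘ qbox S1 S1' = qbox S2 S2' ∘ (f ⊗⊗ f') /\ sarr (box S2 S2') ∘ d = sarr (box S1 S1').

(* d is the left unitor l_S : J [.] S -> S (unique diagonal) *)
Definition is_lunitor (S : sobj) (d : hom (sob (box Jobj S)) (sob S)) : Prop :=
  d ∘ (qbox Jobj S ∘ (qJ ⊗⊗ idm (sob S))) = lam MC (sob S) /\ sarr S ∘ d = sarr (box Jobj S).

Definition runitor (S : sobj) : hom (sob S) (sob (box S Jobj)) :=
  qbox S Jobj ∘ (idm (sob S) ⊗⊗ qJ) ∘ rho_inv MC (sob S).

(* d is the associator a : (S [.] S') [.] S'' -> S [.] (S' [.] S'') *)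
Definition is_assoc (S S' S'' : sobj)
    (d : hom (sob (box (box S S') S'')) (sob (box S (box S' S'')))) : Prop :=
  d ∘ qbox (box S S') S'' ∘ (qbox S S' ⊗⊗ idm (sob S''))
    = qbox S (box S' S'') ∘ (idm (sob S) ⊗⊗ qbox S' S'') ∘ alpha MC (sob S) (sob S') (sob S'')
  /\ sarr (box S (box S' S'')) ∘ d = sarr (box (box S S') S'').

Definition slice_is_monoidal : Prop :=
  (forall S d, @is_lunitor S d -> is_iso d) /\
  (forall S, is_iso (runitor S)) /\
  (forall S S' S'' d, @is_assoc S S' S'' d -> is_iso d).

Definition alg_op (n : nat) (phi : hom (powo PC T n) T) : Prop :=
  phi ∘ prodmap PC (fun _ : 'I_n => mmu Tm) ∘ canon MC PC (fun _ : 'I_n => T) T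
  = mmu Tm ∘ (phi ⊗⊗ idm T).

Definition graded_family (n : nat) (R : 'I_n -> sobj) (R' : sobj) : Type :=
  forall e : sobj, hom (prodo PC (fun i => sob (box (R i) e))) (sob (box R' e)).

(* naturality in e (the action of R [.] - on f being the diagonal id [.] f) *)
Definition gf_natural n (R : 'I_n -> sobj) (R' : sobj) (psi : graded_family R R') : Prop :=
  forall (e e' : sobj) (f : hom (sob e) (sob e')), is_smor f ->
  forall (d : forall i, hom (sob (box (R i) e)) (sob (box (R i) e')))
         (d' : hom (sob (box R' e)) (sob (box R' e'))),
    (forall i, is_boxmap (idm (sob (R i))) f (d i)) ->
    is_boxmap (idm (sob R')) f d' ->
    psi e' ∘ prodmap PC d = d' ∘ psi e.

(* the algebraicity equation for the graded monoid T_M (mu^G = q, G(alpha) = a) *)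
Definition gf_algebraic n (R : 'I_n -> sobj) (R' : sobj) (psi : graded_family R R') : Prop :=
  forall (e e' : sobj)
         (a : forall i, hom (sob (box (box (R i) e) e')) (sob (box (R i) (box e e'))))
         (a' : hom (sob (box (box R' e) e')) (sob (box R' (box e e')))),
    (forall i, is_assoc (a i)) -> is_assoc a' ->
    psi (box e e') ∘ prodmap PC a ∘ prodmap PC (fun i => qbox (box (R i) e) e')
      ∘ canon MC PC (fun i => sob (box (R i) e)) (sob e')
    = a' ∘ qbox (box R' e) e' ∘ (psi e ⊗⊗ idm (sob e')).

Definition graded_alg_op n (R : 'I_n -> sobj) (R' : sobj) (psi : graded_family R R') : Prop :=
  gf_natural psi /\ gf_algebraic psi.

(* psi grades phi (grading components g_(S,s) = s) *)
Definition grades n (R : 'I_n -> sobj) (R' : sobj) (psi : graded_family R R')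
    (phi : hom (powo PC T n) T) : Prop :=
  forall e : sobj, sarr (box R' e) ∘ psi e = phi ∘ prodmap PC (fun i => sarr (box (R i) e)).

End Slice.

(* Main.v *)
Require Import Defs.
From mathcomp Require Import all_boot.
From Stdlib Require Import ClassicalEpsilon ProofIrrelevance FunctionalExtensionality.
Set Implicit Arguments. Unset Strict Implicit.


Section Gen.
Variables (C : category) (MC : monoidal C) (PC : fin_products C) (F : ofs C).
Local Notation "A ⊗ B" := (tens0 MC A B) (at level 35).
Local Notation "f ⊗⊗ g" := (tens1 MC f g) (at level 35).

Lemma rw2 (A B D X : C) (a : hom B D) (b : hom A B) (c : hom A D) :
  a ∘ b = c -> forall (x : hom X A), a ∘ (b ∘ x) = c ∘ x.
Proof. by move=> <- x; rewrite comp_assoc. Qed.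

Lemma rw2L (A B D X : C) (a : hom B D) (b : hom A B) (c : hom A D) :
  a ∘ b = c -> forall (x : hom D X), x ∘ a ∘ b = x ∘ c.
Proof. by move=> <- x; rewrite comp_assoc. Qed.

Lemma rw3L (A B D E X : C) (a : hom D E) (b : hom B D) (c : hom A B) (d : hom A E) :
  a ∘ b ∘ c = d -> forall (x : hom E X), x ∘ a ∘ b ∘ c = x ∘ d.
Proof. by move=> <- x; rewrite !comp_assoc. Qed.

Lemma rw4L (A B D E G X : C) (a : hom E G) (b : hom D E) (c : hom B D) (c' : hom A B) (d : hom A G) :
  a ∘ b ∘ c ∘ c' = d -> forall (x : hom G X), x ∘ a ∘ b ∘ c ∘ c' = x ∘ d.
Proof. by move=> <- x; rewrite !comp_assoc. Qed.

Lemma sig_eq (A : Type) (P : A -> Prop) (x y : sig P) : proj1_sig x = proj1_sig y -> x = y.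
Proof. case: x => x Hx; case: y => y Hy /= E; subst y; f_equal; exact: proof_irrelevance. Qed.

Lemma EM_cancel A B X Y (e : hom A B) (m : hom X Y) (u v : hom B X) :
  Ecl F e -> Mcl F m -> u ∘ e = v ∘ e -> m ∘ u = m ∘ v -> u = v.
Proof.
move=> He Hm H1 H2.
have sq : (m ∘ u) ∘ e = m ∘ (u ∘ e) by rewrite comp_assoc.
case: (diag_unique He Hm sq) => d [_ Hu].
have <- : d = u by apply: Hu.
apply: Hu; split; [by rewrite H1| by rewrite H2].
Qed.

Definition diag A B X Y (e : hom A B) (m : hom X Y) (f : hom A X) (g : hom B Y)
  (He : Ecl F e) (Hm : Mcl F m) (Hs : g ∘ e = m ∘ f) : hom B X :=
  proj1_sig (constructive_indefinite_description _
     (match diag_unique He Hm Hs with ex_intro d (conj H _) => ex_intro _ d H end)).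

Lemma diag_spec A B X Y (e : hom A B) (m : hom X Y) (f : hom A X) (g : hom B Y)
  (He : Ecl F e) (Hm : Mcl F m) (Hs : g ∘ e = m ∘ f) :
  diag He Hm Hs ∘ e = f /\ m ∘ diag He Hm Hs = g.
Proof. rewrite /diag; by case: constructive_indefinite_description. Qed.

Lemma tuple_ext n (X : 'I_n -> C) A (h h' : hom A (prodo PC X)) :
  (forall i, proj PC X i ∘ h = proj PC X i ∘ h') -> h = h'.
Proof.
move=> H; rewrite (@tuple_unique _ _ _ _ _ (fun i => proj PC X i ∘ h') h) //.
by symmetry; apply: tuple_unique.
Qed.

Lemma proj_prodmap n (X Y : 'I_n -> C) (f : forall i, hom (X i) (Y i)) i :
  proj PC Y i ∘ prodmap PC f = f i ∘ proj PC X i.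
Proof. by rewrite /prodmap proj_tuple. Qed.

Lemma proj_canon n (X : 'I_n -> C) Y i :
  proj PC (fun i => X i ⊗ Y) i ∘ canon MC PC X Y = proj PC X i ⊗⊗ idm Y.
Proof. by rewrite /canon proj_tuple. Qed.

Lemma prodmap_comp n (X Y Z : 'I_n -> C) (f : forall i, hom (X i) (Y i))
  (g : forall i, hom (Y i) (Z i)) :
  prodmap PC g ∘ prodmap PC f = prodmap PC (fun i => g i ∘ f i).
Proof.
apply: tuple_ext => i.
by rewrite comp_assoc !proj_prodmap -comp_assoc proj_prodmap comp_assoc.
Qed.

Lemma tens_split A A' B B' (f : hom A A') (g : hom B B') :
  f ⊗⊗ g = (f ⊗⊗ idm B') ∘ (idm A ⊗⊗ g).
Proof. by rewrite -tens1_comp comp_id_l comp_id_r. Qed.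

Lemma tens_split' A A' B B' (f : hom A A') (g : hom B B') :
  f ⊗⊗ g = (idm A' ⊗⊗ g) ∘ (f ⊗⊗ idm B).
Proof. by rewrite -tens1_comp comp_id_l comp_id_r. Qed.

Lemma tens_l A A' A'' B (f : hom A A') (g : hom A' A'') :
  (g ∘ f) ⊗⊗ idm B = (g ⊗⊗ idm B) ∘ (f ⊗⊗ idm B).
Proof. by rewrite -tens1_comp comp_id_l. Qed.

Lemma tens_r A B B' B'' (f : hom B B') (g : hom B' B'') :
  idm A ⊗⊗ (g ∘ f) = (idm A ⊗⊗ g) ∘ (idm A ⊗⊗ f).
Proof. by rewrite -tens1_comp comp_id_l. Qed.

Lemma tens_comm A A' B B' (f : hom A A') (g : hom B B') :
  (f ⊗⊗ idm B') ∘ (idm A ⊗⊗ g) = (idm A' ⊗⊗ g) ∘ (f ⊗⊗ idm B).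
Proof. by rewrite -tens_split tens_split'. Qed.

Lemma rho_inv_nat A B (f : hom A B) :
  rho_inv MC B ∘ f = (f ⊗⊗ idm (munit MC)) ∘ rho_inv MC A.
Proof.
rewrite -[RHS]comp_id_l -(rho_iso1 MC B) -comp_assoc (comp_assoc (rho MC B)) -rho_nat.
by rewrite -comp_assoc rho_iso2 comp_id_r.
Qed.

Lemma canon_nat n (X : 'I_n -> C) Y A (g : hom A (prodo PC X)) :
  canon MC PC X Y ∘ (g ⊗⊗ idm Y) = Defs.tuple PC (fun i => (proj PC X i ∘ g) ⊗⊗ idm Y).
Proof.
apply: tuple_unique => i; by rewrite comp_assoc proj_canon -tens_l.
Qed.

Lemma canon_natY n (X : 'I_n -> C) Y Y' (f : hom Y Y') :
  canon MC PC X Y' ∘ (idm _ ⊗⊗ f) = prodmap PC (fun i => idm (X i) ⊗⊗ f) ∘ canon MC PC X Y.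
Proof.
apply: tuple_ext => i.
by rewrite !comp_assoc proj_canon proj_prodmap -comp_assoc proj_canon tens_comm.
Qed.

Lemma canon_natX n (X X' : 'I_n -> C) Y (f : forall i, hom (X i) (X' i)) :
  canon MC PC X' Y ∘ (prodmap PC f ⊗⊗ idm Y) = prodmap PC (fun i => f i ⊗⊗ idm Y) ∘ canon MC PC X Y.
Proof.
apply: tuple_ext => i.
by rewrite !comp_assoc proj_canon proj_prodmap -comp_assoc proj_canon -!tens_l proj_prodmap.
Qed.

End Gen.


Section Slice2.
Variables (C : category) (MC : monoidal C) (PC : fin_products C)
          (F : ofs C) (Tm : monoid MC).
Hypothesis HEtens : forall (S : sobj F Tm) (A B : C) (e : hom A B),
      Ecl F e -> Ecl F (tens1 MC e (idm (sob S))).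
Local Notation "A ⊗ B" := (tens0 MC A B) (at level 35).
Local Notation "f ⊗⊗ g" := (tens1 MC f g) (at level 35).
Local Notation T := (mT Tm).
Local Notation mu := (mmu Tm).
Local Notation J := (Jobj F Tm).

Lemma tens_cl A A' A'' B B' (f : hom A A') (g : hom A' A'') (h : hom B B') :
  (g ∘ f) ⊗⊗ h = (g ⊗⊗ idm B') ∘ (f ⊗⊗ h).
Proof. by rewrite -tens1_comp comp_id_l. Qed.
Lemma tens_cr A A' B B' B'' (f : hom B B') (g : hom B' B'') (h : hom A A') :
  h ⊗⊗ (g ∘ f) = (idm A' ⊗⊗ g) ∘ (h ⊗⊗ f).
Proof. by rewrite -tens1_comp comp_id_l. Qed.

Lemma tens_rL A B B' B'' X (f : hom B B') (g : hom B' B'') (x : hom (A ⊗ B'') X) :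
  x ∘ (idm A ⊗⊗ g) ∘ (idm A ⊗⊗ f) = x ∘ (idm A ⊗⊗ (g ∘ f)).
Proof. by rewrite -comp_assoc -tens_r. Qed.
Lemma tens_lL A A' A'' B X (f : hom A A') (g : hom A' A'') (x : hom (A'' ⊗ B) X) :
  x ∘ (g ⊗⊗ idm B) ∘ (f ⊗⊗ idm B) = x ∘ ((g ∘ f) ⊗⊗ idm B).
Proof. by rewrite -comp_assoc -tens_l. Qed.

Lemma tens_commL A A' B B' X (f : hom A A') (g : hom B B') (x : hom (A' ⊗ B') X) :
  x ∘ (f ⊗⊗ idm B') ∘ (idm A ⊗⊗ g) = x ∘ (idm A' ⊗⊗ g) ∘ (f ⊗⊗ idm B).
Proof. by rewrite -!comp_assoc tens_comm. Qed.
Lemma alphaL A A' B D X (f : hom A A') (x : hom (A' ⊗ (B ⊗ D)) X) :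
  x ∘ (f ⊗⊗ idm (B ⊗ D)) ∘ alpha MC A B D = x ∘ alpha MC A' B D ∘ ((f ⊗⊗ idm B) ⊗⊗ idm D).
Proof. by rewrite -!comp_assoc alpha_nat tens1_id. Qed.

Lemma qE (S S' : sobj F Tm) : Ecl F (qbox S S').
Proof. exact: fe_E. Qed.
Lemma box_sq (S S' : sobj F Tm) : sarr (box S S') ∘ qbox S S' = mu ∘ (sarr S ⊗⊗ sarr S').
Proof. exact: fact_eq. Qed.

Lemma assocE (S S' S'' : sobj F Tm) :
  Ecl F (qbox (box S S') S'' ∘ (qbox S S' ⊗⊗ idm (sob S''))).
Proof. apply: E_comp; [exact: HEtens (qE _ _) | exact: qE]. Qed.

Lemma assoc_sq (S S' S'' : sobj F Tm) :
  sarr (box (box S S') S'') ∘ (qbox (box S S') S'' ∘ (qbox S S' ⊗⊗ idm (sob S'')))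
  = sarr (box S (box S' S'')) ∘ (qbox S (box S' S'') ∘ (idm _ ⊗⊗ qbox S' S'') ∘ alpha MC _ _ _).
Proof.
rewrite comp_assoc box_sq -comp_assoc -tens1_comp comp_id_r box_sq tens_cl.
rewrite !comp_assoc box_sq -(comp_assoc mu (sarr S ⊗⊗ _)) -tens1_comp comp_id_r box_sq tens_cr.
rewrite massoc -!comp_assoc; congr (_ ∘ _); congr (_ ∘ _).
by rewrite alpha_nat.
Qed.

Definition asc (S S' S'' : sobj F Tm) := diag (assocE S S' S'') (sarr_M _) (assoc_sq S S' S'').

Lemma asc_is (S S' S'' : sobj F Tm) : is_assoc (asc S S' S'').
Proof.
case: (diag_spec (assocE S S' S'') (sarr_M _) (assoc_sq S S' S'')) => H1 H2.
by split; rewrite // -comp_assoc.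
Qed.

Lemma lunE (e : sobj F Tm) : Ecl F (qbox J e ∘ (qJ F Tm ⊗⊗ idm (sob e))).
Proof. apply: E_comp; [exact: HEtens (fe_E _ _) | exact: qE]. Qed.

Lemma lun_sq (e : sobj F Tm) :
  sarr (box J e) ∘ (qbox J e ∘ (qJ F Tm ⊗⊗ idm (sob e))) = sarr e ∘ lam MC (sob e).
Proof.
rewrite comp_assoc box_sq -(comp_assoc mu) -tens1_comp comp_id_r.
rewrite /qJ /= fact_eq tens_split comp_assoc munit_l.
by rewrite lam_nat.
Qed.

Definition lun (e : sobj F Tm) := diag (lunE e) (sarr_M e) (lun_sq e).

Lemma lun_smor (e : sobj F Tm) : is_smor (lun e).
Proof. exact: (proj2 (diag_spec (lunE e) (sarr_M e) (lun_sq e))). Qed.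
Lemma lun_q (e : sobj F Tm) : lun e ∘ (qbox J e ∘ (qJ F Tm ⊗⊗ idm (sob e))) = lam MC (sob e).
Proof. exact: (proj1 (diag_spec (lunE e) (sarr_M e) (lun_sq e))). Qed.

Lemma bm_sq (S e e' : sobj F Tm) (f : hom (sob e) (sob e')) (Hf : is_smor f) :
  sarr (box S e) ∘ qbox S e = sarr (box S e') ∘ (qbox S e' ∘ (idm (sob S) ⊗⊗ f)).
Proof.
by rewrite comp_assoc !box_sq -comp_assoc -tens1_comp comp_id_r Hf.
Qed.

Definition bmap (S e e' : sobj F Tm) (f : hom (sob e) (sob e')) (Hf : is_smor f) :=
  diag (qE S e) (sarr_M (box S e')) (bm_sq S Hf).

Lemma bmap_is (S e e' : sobj F Tm) (f : hom (sob e) (sob e')) (Hf : is_smor f) :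
  is_boxmap (idm (sob S)) f (bmap S Hf).
Proof. exact: diag_spec. Qed.

Lemma run_sarr (S : sobj F Tm) : sarr (box S J) ∘ runitor S = sarr S.
Proof.
rewrite /runitor !comp_assoc box_sq -(comp_assoc mu) -tens1_comp comp_id_r.
rewrite /qJ /= fact_eq tens_split' -!comp_assoc (comp_assoc mu) munit_r.
by rewrite -rho_inv_nat comp_assoc rho_iso2 comp_id_l.
Qed.

Lemma key_m (S e : sobj F Tm) :
  bmap S (lun_smor e) ∘ asc S J e ∘ qbox (box S J) e ∘ (runitor S ⊗⊗ idm (sob e))
  = qbox S e.
Proof.
rewrite /runitor !tens_l !comp_assoc.
case: (asc_is S J e) => Ha _; rewrite (rw3L Ha) !comp_assoc.
rewrite (rw2L (alpha_nat _ _ _ _)) !comp_assoc.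
case: (bmap_is S (lun_smor e)) => Hb _; rewrite Hb.
rewrite !tens_rL.
rewrite lun_q.
rewrite (rw2L (triangle _ _ _)) tens_lL rho_iso2 tens1_id comp_id_r.
done.
Qed.
End Slice2.


Section Main.
Variables (C : category) (MC : monoidal C) (PC : fin_products C)
          (F : ofs C) (Tm : monoid MC).
Hypothesis HEtens : forall (S : sobj F Tm) (A B : C) (e : hom A B),
      Ecl F e -> Ecl F (tens1 MC e (idm (sob S))).
Hypothesis Hmon : slice_is_monoidal F Tm.
Hypothesis Hcanon : forall (n : nat) (X : 'I_n -> C) (Y : C), Ecl F (canon MC PC X Y).
Hypothesis Hprod : forall (n : nat) (X Y : 'I_n -> C) (f : forall i, hom (X i) (Y i)),
      (forall i, Ecl F (f i)) -> Ecl F (prodmap PC f).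
Variables (n : nat) (phi : hom (powo PC (mT Tm) n) (mT Tm)).
Hypothesis Hphi : @alg_op C MC PC Tm n phi.
Variables (R : 'I_n -> sobj F Tm) (R' : sobj F Tm).

Local Notation "A ⊗ B" := (tens0 MC A B) (at level 35).
Local Notation "f ⊗⊗ g" := (tens1 MC f g) (at level 35).
Local Notation T := (mT Tm).
Local Notation mu := (mmu Tm).
Local Notation J := (Jobj F Tm).

Lemma prodmap_ext m (X Y : 'I_m -> C) (f g : forall i, hom (X i) (Y i)) :
  (forall i, f i = g i) -> prodmap PC f = prodmap PC g.
Proof. by move=> H; have -> : f = g by apply: functional_extensionality_dep. Qed.

Lemma prodmap_compL m (X Y Z : 'I_m -> C) W (f : forall i, hom (X i) (Y i))
  (g : forall i, hom (Y i) (Z i)) (x : hom (prodo PC Z) W) :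
  x ∘ prodmap PC g ∘ prodmap PC f = x ∘ prodmap PC (fun i => g i ∘ f i).
Proof. by rewrite -comp_assoc prodmap_comp. Qed.

Lemma L1 (X : 'I_n -> C) (Y : C) (s : forall i, hom (X i) T) (t : hom Y T) :
  phi ∘ prodmap PC (fun i => mu ∘ (s i ⊗⊗ t)) ∘ canon MC PC X Y
  = mu ∘ ((phi ∘ prodmap PC s) ⊗⊗ t).
Proof.
rewrite -comp_assoc.
have -> : prodmap PC (fun i => mu ∘ (s i ⊗⊗ t)) ∘ canon MC PC X Y
  = prodmap PC (fun _ : 'I_n => mu) ∘ canon MC PC (fun _ => T) T ∘ (prodmap PC s ⊗⊗ t).
  apply: tuple_ext => i.
  rewrite !comp_assoc !proj_prodmap -!comp_assoc proj_canon.
  rewrite -tens1_comp comp_id_r (comp_assoc (proj _ _ _)) proj_canon.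
  by rewrite -tens1_comp comp_id_l proj_prodmap.
rewrite !comp_assoc.
have -> : phi ∘ prodmap PC (fun _ : 'I_n => mu) ∘ canon MC PC (fun _ => T) T = mu ∘ (phi ⊗⊗ idm T)
  by exact: Hphi.
by rewrite -comp_assoc -tens1_comp comp_id_l.
Qed.

Definition Q (e : sobj F Tm) : hom (prodo PC (fun i => sob (R i)) ⊗ sob e) (prodo PC (fun i => sob (box (R i) e))) :=
  locked (prodmap PC (fun i => qbox (R i) e) ∘ canon MC PC (fun i => sob (R i)) (sob e)).

Lemma QE e : Ecl F (Q e).
Proof. rewrite /Q -lock; apply: E_comp; [exact: Hcanon | apply: Hprod => i; exact: qE]. Qed.

Lemma proj_Q e i : proj PC _ i ∘ Q e = qbox (R i) e ∘ (proj PC _ i ⊗⊗ idm (sob e)).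
Proof. by rewrite /Q -lock comp_assoc proj_prodmap -comp_assoc proj_canon. Qed.

Lemma Q_def e : Q e = prodmap PC (fun i => qbox (R i) e) ∘ canon MC PC (fun i => sob (R i)) (sob e).
Proof. by rewrite /Q -lock. Qed.

Section Fwd.
Variables (p : hom (prodo PC (fun i => sob (R i))) (sob R'))
          (Hp : sarr R' ∘ p = phi ∘ prodmap PC (fun i => sarr (R i))).

Lemma fwd_sq e :
  (phi ∘ prodmap PC (fun i => sarr (box (R i) e))) ∘ Q e
  = sarr (box R' e) ∘ (qbox R' e ∘ (p ⊗⊗ idm (sob e))).
Proof.
rewrite Q_def !comp_assoc -(comp_assoc phi) prodmap_comp.
rewrite (prodmap_ext (g := fun i => mu ∘ (sarr (R i) ⊗⊗ sarr e))); last by move=> i; exact: box_sq.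
rewrite L1 -Hp box_sq -comp_assoc -tens1_comp comp_id_r.
done.
Qed.

Definition psiF : graded_family PC R R' :=
  fun e => diag (QE e) (sarr_M (box R' e)) (fwd_sq e).

Lemma psiF_q e : psiF e ∘ Q e = qbox R' e ∘ (p ⊗⊗ idm (sob e)).
Proof. exact: (proj1 (diag_spec (QE e) (sarr_M (box R' e)) (fwd_sq e))). Qed.
Lemma psiF_s e : sarr (box R' e) ∘ psiF e = phi ∘ prodmap PC (fun i => sarr (box (R i) e)).
Proof. exact: (proj2 (diag_spec (QE e) (sarr_M (box R' e)) (fwd_sq e))). Qed.

Lemma psiF_nat : gf_natural psiF.
Proof.
move=> e e' f Hf d d' Hd Hd'.
apply: (EM_cancel (QE e) (sarr_M (box R' e'))).
- rewrite -[LHS]comp_assoc.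
  have -> : prodmap PC d ∘ Q e = Q e' ∘ (idm _ ⊗⊗ f).
    rewrite Q_def comp_assoc prodmap_comp.
    rewrite (prodmap_ext (g := fun i => qbox (R i) e' ∘ (idm _ ⊗⊗ f))); last by move=> i; case: (Hd i).
    by rewrite -prodmap_comp Q_def -!comp_assoc canon_natY.
  rewrite comp_assoc psiF_q -[LHS]comp_assoc tens_comm -(comp_assoc d') psiF_q.
  by rewrite !comp_assoc; case: Hd' => -> _.
- rewrite !comp_assoc psiF_s; case: Hd' => _ ->; rewrite psiF_s -comp_assoc prodmap_comp.
  by congr (_ ∘ _); apply: prodmap_ext => i; case: (Hd i).
Qed.

Lemma psiF_alg : gf_algebraic psiF.
Proof.
move=> e e' a a' Ha Ha'.
apply: (EM_cancel (HEtens e' (QE e)) (sarr_M (box R' (box e e')))).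
- rewrite -![LHS]comp_assoc.
  have -> : prodmap PC a ∘ (prodmap PC (fun i => qbox (box (R i) e) e')
        ∘ (canon MC PC (fun i => sob (box (R i) e)) (sob e') ∘ (Q e ⊗⊗ idm (sob e'))))
      = Q (box e e') ∘ (idm _ ⊗⊗ qbox e e') ∘ alpha MC _ _ _.
    apply: tuple_ext => i.
    rewrite [LHS]comp_assoc proj_prodmap -[LHS]comp_assoc (comp_assoc (proj _ _ _) (prodmap _ _)).
    rewrite proj_prodmap -comp_assoc (comp_assoc (proj _ _ _) (canon _ _ _ _)) proj_canon.
    rewrite -tens_l (proj_Q e i) tens_l !comp_assoc; case: (Ha i) => -> _.
    rewrite -!comp_assoc alpha_nat tens1_id !comp_assoc proj_Q.
    by rewrite tens_commL.
  rewrite !comp_assoc psiF_q tens_commL alphaL tens_lL psiF_q tens_l !comp_assoc.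
  by case: Ha' => ->.
- rewrite !comp_assoc psiF_s; case: Ha' => _ ->.
  rewrite box_sq -(comp_assoc mu) -tens1_comp comp_id_r psiF_s -L1.
  rewrite !prodmap_compL; congr (_ ∘ _ ∘ _).
  apply: prodmap_ext => i; rewrite comp_assoc; case: (Ha i) => _ ->; exact: box_sq.
Qed.

End Fwd.

Definition rinv (S : sobj F Tm) : hom (sob (box S J)) (sob S) :=
  proj1_sig (constructive_indefinite_description _ (proj1 (proj2 Hmon) S)).
Lemma rinv_spec S : rinv S ∘ runitor S = idm _ /\ runitor S ∘ rinv S = idm _.
Proof. rewrite /rinv; by case: constructive_indefinite_description. Qed.
Lemma rinv_sarr S : sarr S ∘ rinv S = sarr (box S J).
Proof. by rewrite -run_sarr -comp_assoc (proj2 (rinv_spec S)) comp_id_r. Qed.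

Lemma prodmap_run :
  prodmap PC (fun i => runitor (R i)) = Q J ∘ (idm _ ⊗⊗ qJ F Tm) ∘ rho_inv MC _.
Proof.
apply: tuple_ext => i.
rewrite proj_prodmap !comp_assoc proj_Q tens_commL /runitor -!comp_assoc.
by rewrite -rho_inv_nat.
Qed.

Section Bwd.
Variables (psi : graded_family PC R R') (Hpsi : graded_alg_op psi /\ grades psi phi).

Definition pB := rinv R' ∘ psi J ∘ prodmap PC (fun i => runitor (R i)).

Lemma pB_cond : sarr R' ∘ pB = phi ∘ prodmap PC (fun i => sarr (R i)).
Proof.
rewrite /pB !comp_assoc rinv_sarr (proj2 Hpsi J) -comp_assoc prodmap_comp.
by congr (_ ∘ _); apply: prodmap_ext => i; exact: run_sarr.
Qed.

Lemma pB_q e : psi e ∘ Q e = qbox R' e ∘ (pB ⊗⊗ idm (sob e)).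
Proof.
have Hrp : runitor R' ∘ pB = psi J ∘ prodmap PC (fun i => runitor (R i)).
  by rewrite /pB !comp_assoc (proj2 (rinv_spec R')) comp_id_l.
have HQ : prodmap PC (fun i => bmap (R i) (lun_smor HEtens e)) ∘ prodmap PC (fun i => asc HEtens (R i) J e)
   ∘ prodmap PC (fun i => qbox (box (R i) J) e) ∘ canon MC PC (fun i => sob (box (R i) J)) (sob e)
   ∘ (prodmap PC (fun i => runitor (R i)) ⊗⊗ idm (sob e)) = Q e.
  rewrite -[LHS]comp_assoc canon_natX !comp_assoc !prodmap_comp Q_def.
  by congr (_ ∘ _); apply: prodmap_ext => i; exact: (key_m HEtens).
have Alg := proj2 (proj1 Hpsi) J e (fun i => asc HEtens (R i) J e) (asc HEtens R' J e)
   (fun i => asc_is HEtens (R i) J e) (asc_is HEtens R' J e).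
have Nat := proj1 (proj1 Hpsi) (box J e) e (lun HEtens e) (lun_smor HEtens e)
   (fun i => bmap (R i) (lun_smor HEtens e)) (bmap R' (lun_smor HEtens e))
   (fun i => bmap_is (R i) (lun_smor HEtens e)) (bmap_is R' (lun_smor HEtens e)).
rewrite -HQ !comp_assoc Nat (rw4L Alg) !comp_assoc tens_lL -Hrp tens_l !comp_assoc.
by rewrite (key_m HEtens).
Qed.
End Bwd.

Lemma fwd_bwd (p : hom (prodo PC (fun i => sob (R i))) (sob R'))
  (Hp : sarr R' ∘ p = phi ∘ prodmap PC (fun i => sarr (R i))) : pB (psiF Hp) = p.
Proof.
rewrite /pB prodmap_run !comp_assoc.
transitivity (rinv R' ∘ (qbox R' J ∘ (p ⊗⊗ idm _)) ∘ (idm _ ⊗⊗ qJ F Tm) ∘ rho_inv MC _).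
  congr (_ ∘ _ ∘ _); rewrite -comp_assoc; congr (_ ∘ _); exact: psiF_q Hp J.
rewrite !comp_assoc tens_commL -!comp_assoc -rho_inv_nat !comp_assoc.
have := proj1 (rinv_spec R'); rewrite /runitor !comp_assoc => ->; exact: comp_id_l.
Qed.

Lemma bwd_fwd (psi : graded_family PC R R') (Hpsi : graded_alg_op psi /\ grades psi phi) : psiF (pB_cond Hpsi) = psi.
Proof.
apply: functional_extensionality_dep => e.
apply: (EM_cancel (QE e) (sarr_M (box R' e))).
- by rewrite psiF_q pB_q.
- by rewrite psiF_s (proj2 Hpsi e).
Qed.

End Main.

Theorem lemma5p5 (C : category) (MC : monoidal C) (PC : fin_products C)
  (F : ofs C) (Tm : monoid MC)
  (HEtens : forall (S : sobj F Tm) (A B : C) (e : hom A B),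
      Ecl F e -> Ecl F (tens1 MC e (idm (sob S))))
  (Hmon : slice_is_monoidal F Tm)
  (Hcanon : forall (n : nat) (X : 'I_n -> C) (Y : C), Ecl F (canon MC PC X Y))
  (Hprod : forall (n : nat) (X Y : 'I_n -> C) (f : forall i, hom (X i) (Y i)),
      (forall i, Ecl F (f i)) -> Ecl F (prodmap PC f))
  (n : nat) (phi : hom (powo PC (mT Tm) n) (mT Tm)) (Hphi : @alg_op C MC PC Tm n phi)
  (R : 'I_n -> sobj F Tm) (R' : sobj F Tm) :
  exists f : {p : hom (prodo PC (fun i => sob (R i))) (sob R')
               | sarr R' ∘ p = phi ∘ prodmap PC (fun i => sarr (R i))}
             -> {psi : graded_family PC R R'
               | graded_alg_op psi /\ grades psi phi},
    bijective f.
Proof.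
pose fwd := fun x : {p : hom (prodo PC (fun i => sob (R i))) (sob R')
               | sarr R' ∘ p = phi ∘ prodmap PC (fun i => sarr (R i))} =>
  exist (fun psi => graded_alg_op psi /\ grades psi phi)
    (psiF Hcanon Hprod Hphi (proj2_sig x))
    (conj (conj (psiF_nat Hcanon Hprod Hphi (proj2_sig x))
                (psiF_alg HEtens Hcanon Hprod Hphi (proj2_sig x)))
          (psiF_s Hcanon Hprod Hphi (proj2_sig x))).
pose bwd := fun y : {psi : graded_family PC R R' | graded_alg_op psi /\ grades psi phi} =>
  exist (fun p => sarr R' ∘ p = phi ∘ prodmap PC (fun i => sarr (R i)))
    (pB Hmon (proj1_sig y)) (pB_cond Hmon (proj2_sig y)).
exists fwd; exists bwd.
- move=> x; apply: sig_eq => /=; exact: fwd_bwd.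
- move=> y; apply: sig_eq => /=; exact: bwd_fwd.
Qed.
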